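(* Let $D\geq 1$, $\mathcal{C}=\{-1,1\}^D$, and let $\mathfrak{A}\subseteq 2^{[D]}$ be a collection of subsets of $[D]$. Let $\mathcal{F}(\mathfrak{A})$ be the class of Boolean functions $f:\mathcal{C}\to\{-1,1\}$ whose Fourier coefficients vanish outside $\mathfrak{A}$, i.e. $\hat f(S)=0$ for all $S\subseteq[D]$ with $S\notin\mathfrak{A}$, where $\hat f(S)=\mathbb{E}_{X\sim\mathrm{Unif}(\mathcal{C})}[f(X)\chi_S(X)]$ and $\chi_S(x)=\prod_{i\in S}x_i$. Then \[ \dim_E(\mathcal{F}(\mathfrak{A}))\leq|\mathfrak{A}|. \] In particular, when $\mathfrak{A}$ consists of sets of size at most $k$, $|\mathfrak{A}|\leq\binom{D}{0}+\binom{D}{1}+\cdots+\binom{D}{k}\leq(eD/k)^k$.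
   Context: For a class $\mathcal{F}$ of functions $\mathcal{C}\to\{-1,1\}$, a point $x\in\mathcal{C}$ is independent of a sequence $(x_j)_{j=1}^m$ with respect to $\mathcal{F}$ if there exist $f_1,f_2\in\mathcal{F}$ with $f_1(x_j)=f_2(x_j)$ for all $j\in[m]$ but $f_1(x)\neq f_2(x)$. The eluder dimension $\dim_E(\mathcal{F})$ is the largest $K$ such that there exist $x_1,\dots,x_K\in\mathcal{C}$ with each $x_i$ independent of $(x_j)_{j=1}^{i-1}$ with respect to $\mathcal{F}$. *)

(* Defs.v *)
From mathcomp Require Import all_boot all_order all_algebra.
From mathcomp Require Import all_classical all_reals all_analysis.
Set Implicit Arguments. Unset Strict Implicit. Unset Printing Implicit Defensive.
Import Order.TTheory GRing.Theory Num.Theory.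
Local Open Scope ring_scope.

(* The hypercube C = {-1,1}^D: a point is encoded by a bit vector, bit b
   standing for the coordinate value (-1)^b, i.e. true <-> -1, false <-> 1. *)
Definition cube (D : nat) := {ffun 'I_D -> bool}.

Definition coord (D : nat) (x : cube D) (i : 'I_D) : rat :=
  if x i then -1 else 1.

Definition chi (D : nat) (S : {set 'I_D}) (x : cube D) : rat :=
  \prod_(i in S) coord x i.

Definition fourier (D : nat) (f : cube D -> rat) (S : {set 'I_D}) : rat :=
  (\sum_(x : cube D) f x * chi S x) / (#|{: cube D}|)%:R.

Definition boolean_fun (D : nat) (f : cube D -> rat) : Prop :=
  forall x, f x = 1 \/ f x = -1.

Definition FA (D : nat) (A : {set {set 'I_D}}) (f : cube D -> rat) : Prop :=
  boolean_fun f /\ forall S : {set 'I_D}, S \notin A -> fourier f S = 0.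

Definition independent (T : eqType) (F : (T -> rat) -> Prop) (x : T) (s : seq T) :
  Prop :=
  exists f1 f2, F f1 /\ F f2 /\ (forall y, y \in s -> f1 y = f2 y)
                /\ f1 x <> f2 x.

Definition eluder_seq (T : eqType) (F : (T -> rat) -> Prop) (s : seq T) : Prop :=
  forall (i : nat) (x0 : T), (i < size s)%N -> independent F (nth x0 s i) (take i s).

(* Main.v *)
Require Import Defs.
From mathcomp Require Import all_boot all_order all_algebra.
From mathcomp Require Import all_classical all_reals all_analysis.
From mathcomp Require Import ring.
Import Order.TTheory GRing.Theory Num.Theory.
Local Open Scope ring_scope.

Lemma sum_prod_set (n : nat) (a : 'I_n -> rat) :
  \sum_(S : {set 'I_n}) \prod_(i in S) a i = \prod_(i < n) (1 + a i).
Proof.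
have -> : \prod_(i < n) (1 + a i) =
   \prod_(i < n) \sum_(b : bool) (if b then a i else 1).
  by apply: eq_bigr => i _; rewrite big_bool /= addrC.
rewrite bigA_distr_bigA /=.
rewrite (reindex (fun f : {ffun 'I_n -> bool} => [set i | f i])) /=; last first.
  exists (fun S : {set 'I_n} => [ffun i => i \in S]) => f _.
    by apply/ffunP => i; rewrite ffunE inE.
  by apply/setP => i; rewrite inE ffunE.
apply: eq_bigr => f _.
rewrite [RHS](bigID (fun i => f i)) /= [X in _ * X]big1 ?mulr1; last by move=> i /negbTE ->.
rewrite [RHS](eq_bigr (fun i => a i)); last by move=> i ->.
by apply: eq_bigl => i; rewrite inE.
Qed.

Lemma sum_chi (D : nat) (x y : cube D) :
  \sum_(S : {set 'I_D}) chi S x * chi S y = if x == y then 2%:R ^+ D else 0.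
Proof.
under eq_bigr do rewrite /Defs.chi -big_split /=.
rewrite sum_prod_set.
case: eqP => [->|/eqP nxy].
  rewrite -[X in _ = X ^+ _]/(1 + 1) -[in RHS](card_ord D) -prodr_const.
  by apply: eq_bigr => i _; rewrite /Defs.coord; case: (y i) => /=; rewrite ?mulrNN ?mulr1.
have [i hi] : exists i, x i != y i.
  apply/existsP; apply: contraR nxy => /existsPn h; apply/eqP/ffunP => i.
  by apply/eqP; move: (h i); rewrite negbK.
rewrite (bigD1 i) //= /Defs.coord.
by move: hi; case: (x i); case: (y i) => //= _; rewrite ?mulrN ?mulNr mulr1 subrr mul0r.
Qed.

Lemma c_neq0 (D : nat) : (2%:R ^+ D : rat) != 0.
Proof. by rewrite expf_eq0 pnatr_eq0 andbF. Qed.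

Lemma inversion (D : nat) (g : cube D -> rat) (x : cube D) :
  g x = (2%:R ^+ D)^-1 * \sum_(S : {set 'I_D}) (\sum_(y : cube D) g y * chi S y) * chi S x.
Proof.
have -> : \sum_(S : {set 'I_D}) (\sum_(y : cube D) g y * chi S y) * chi S x
          = \sum_(y : cube D) g y * (if y == x then 2%:R ^+ D else 0).
  transitivity (\sum_(S : {set 'I_D}) \sum_(y : cube D) g y * (chi S y * chi S x)).
    apply: eq_bigr => S _; rewrite mulr_suml; apply: eq_bigr => y _; by rewrite mulrA.
  rewrite exchange_big /=; apply: eq_bigr => y _.
  by rewrite -mulr_sumr sum_chi.
rewrite (bigD1 x) //= eqxx big1 ?addr0; last by move=> y /negbTE ->; rewrite mulr0.
by rewrite mulrC -mulrA divff ?c_neq0 // mulr1.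
Qed.

Lemma part1 (D : nat) (A : {set {set 'I_D}}) (s : seq (cube D)) :
  eluder_seq (FA A) s -> (size s <= #|A|)%N.
Proof.
move=> hs.
set K := size s.
pose x0 : cube D := [ffun _ => false].
have hg : forall i : 'I_K, exists g : cube D -> rat,
   (forall S, S \notin A -> \sum_y g y * chi S y = 0) /\
   (forall j : 'I_K, (j < i)%N -> g (nth x0 s j) = 0) /\ g (nth x0 s i) != 0.
  move=> i.
  have [f1 [f2 [F1 [F2 [agree diff]]]]] := hs i x0 (ltn_ord i).
  exists (fun y => f1 y - f2 y); split; [|split].
  - move=> S hS.
    have hN : (#|{: cube D}|%:R : rat) != 0.
      by rewrite pnatr_eq0 -lt0n; apply/card_gt0P; exists x0.
    have h0 : forall f, FA A f -> \sum_y f y * chi S y = 0.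
      move=> f [_ hf]; move: (hf S hS); rewrite /fourier => /eqP.
      by rewrite mulf_eq0 invr_eq0 (negbTE hN) orbF => /eqP.
    under eq_bigr do rewrite mulrBl.
    by rewrite sumrB (h0 _ F1) (h0 _ F2) subrr.
  - move=> j hj; apply/eqP; rewrite subr_eq0; apply/eqP/agree.
    rewrite -(nth_take x0 hj); apply: mem_nth.
    by rewrite size_take ltn_ord.
  - by rewrite subr_eq0; apply/eqP.
have [G hG] := boolp.choice hg.
pose M := \matrix_(i < K, j < K) G j (nth x0 s i).
pose E := \matrix_(i < K, k < #|A|) chi (enum_val k) (nth x0 s i).
pose C := \matrix_(k < #|A|, j < K)
   ((2%:R ^+ D)^-1 * \sum_y G j y * chi (enum_val k) y).
have hM : M = E *m C.
  apply/matrixP => i j; rewrite !mxE inversion.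
  rewrite (bigID (fun S => S \in A)) /= [X in _ + X]big1 ?addr0; last first.
    by move=> S hS; rewrite (proj1 (hG j)) ?mul0r.
  rewrite big_enum_val mulr_sumr; apply: eq_bigr => k _.
  by rewrite /E /C !mxE mulrA [_ * chi _ _]mulrC.
have unitM : M \in unitmx.
  rewrite unitmxE unitfE det_trig; last first.
    by apply/is_trig_mxP => i0 j0 hij; rewrite /M mxE (proj1 (proj2 (hG j0))).
  by apply/prodf_neq0 => i0 _; rewrite /M mxE (proj2 (proj2 (hG i0))).
have := mxrank_unit unitM; rewrite hM => <-.
exact: leq_trans (mxrankM_maxl _ _) (rank_leq_col _).
Qed.

Lemma part2a (D : nat) (A : {set {set 'I_D}}) (k : nat) :
  (forall S, S \in A -> (#|S| <= k)%N) -> (#|A| <= \sum_(i < k.+1) 'C(D, i))%N.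
Proof.
move=> hA.
apply: (@leq_trans #|[set S : {set 'I_D} | (#|S| <= k)%N]|).
  by apply: subset_leq_card; apply/fintype.subsetP => S hS; rewrite inE hA.
rewrite -finset.sum1dep_card (partition_big (fun S : {set 'I_D} => (inord #|S| : 'I_k.+1)) predT) //=.
apply: eq_leq; apply: eq_bigr => j _.
have -> : 'C(D, j) = (\sum_(S : {set 'I_D} | #|S| == j) 1)%N.
  by rewrite finset.sum1dep_card card_draws card_ord.
apply: eq_bigl => S.
case: (leqP #|S| k) => hS /=.
  by rewrite -(inj_eq val_inj) /= inordK.
apply/esym/negbTE; apply: contraTN hS => /eqP ->; by rewrite -leqNgt -ltnS ltn_ord.
Qed.

Lemma part2b (R : realType) (D k : nat) : (1 <= k <= D)%N ->
  ((\sum_(i < k.+1) 'C(D, i))%:R <= (expR (1 : R) * D%:R / k%:R) ^+ k :> R).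
Proof.
case/andP => hk hkD.
have kpos : (0 : R) < k%:R by rewrite ltr0n.
have Dpos : (0 : R) < D%:R by rewrite ltr0n (leq_trans hk hkD).
set x : R := k%:R / D%:R.
have x0 : 0 <= x by rewrite divr_ge0 ?ltW.
have x1 : x <= 1 by rewrite ler_pdivrMr // mul1r ler_nat.
have xpos : 0 < x by rewrite divr_gt0.
have key : x ^+ k * (\sum_(i < k.+1) 'C(D, i))%:R <= expR 1 ^+ k.
  rewrite natr_sum mulr_sumr.
  apply: (@le_trans _ _ (\sum_(i < k.+1) x ^+ i *+ 'C(D, i))).
    apply: ler_sum => i _; rewrite -[x ^+ i *+ _]mulr_natl [X in _ <= X]mulrC. rewrite ler_wpM2r ?ler0n //.
    by apply: ler_wiXn2l => //; rewrite -ltnS.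
  apply: (@le_trans _ _ (\sum_(i < D.+1) x ^+ i *+ 'C(D, i))).
    rewrite (big_ord_widen _ (fun i => x ^+ i *+ 'C(D, i)) (_ : k.+1 <= D.+1)%N) //.
    rewrite big_mkcond /=; apply: ler_sum => i _.
    by case: ifP => // _; rewrite mulrn_wge0 // exprn_ge0.
  rewrite -exprD1n addrC.
  apply: (@le_trans _ _ (expR x ^+ D)).
    by apply: lerXn2r; rewrite ?nnegrE ?expR_ge0 ?addr_ge0 // expR_ge1Dx.
  rewrite -!expRM_natl; have -> : D%:R * x = k%:R * 1 by rewrite /x mulr1 mulrC divfK ?gt_eqF.
  by [].
have xkpos : 0 < x ^+ k by rewrite exprn_gt0.
rewrite -(ler_pM2l xkpos); apply: (le_trans key).
rewrite -exprMn; apply: lerXn2r; rewrite ?nnegrE ?expR_ge0 //.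
  by rewrite mulr_ge0 // divr_ge0 ?mulr_ge0 ?expR_ge0 ?ler0n.
have -> : x * (expR 1 * D%:R / k%:R) = expR 1 by rewrite /x; field; rewrite ?gt_eqF. 
by [].
Qed.

Theorem proposition3 (D : nat) (hD : (1 <= D)%N) (A : {set {set 'I_D}}) :
  (forall s : seq (cube D), eluder_seq (FA A) s -> (size s <= #|A|)%N) /\
  (forall (R : realType) (k : nat), (1 <= k <= D)%N ->
     (forall S, S \in A -> (#|S| <= k)%N) ->
     (#|A| <= \sum_(i < k.+1) 'C(D, i))%N /\
     ((\sum_(i < k.+1) 'C(D, i))%:R <= (expR (1 : R) * D%:R / k%:R) ^+ k :> R)).
Proof.
split.
  by move=> s hs; apply: part1 hs.
move=> R k hk hA; split.
  exact: part2a hA.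
exact: part2b hk.
Qed.
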